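(* Let $V$ be a finite nonempty set and $f:\{0,1\}^V\to\{0,1\}^V$. If $f$ is even or odd, then for every $x\in\{0,1\}^V$ every vertex of the local interaction graph $Gf(x)$ has odd out-degree; in particular $Gf(x)$ has a cycle.
   Context: $\oplus$ is componentwise addition mod 2; $\|x\|$ is the number of $1$s of $x$, and $x$ is even (odd) if $\|x\|$ is even (odd). The conjugate is $\tilde f(x)=f(x)\oplus x$; $f$ is even (odd) if $\tilde f(\{0,1\}^V)$ is exactly the set of even (odd) points of $\{0,1\}^V$. For $x^{j\alpha}$ the point equal to $x$ except its $j$-component is $\alpha$, $Gf(x)$ is the signed digraph on $V$ with a positive arc from $j$ to $i$ if $f_i(x^{j1})-f_i(x^{j0})=1$ and a negative arc if it equals $-1$ (loops allowed; out-degree counts loops). A cycle is a subgraph whose underlying unsigned digraph is a directed cycle. *)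

(* Defs.v *)
From mathcomp Require Import all_boot all_order all_algebra.
Set Implicit Arguments. Unset Strict Implicit. Unset Printing Implicit Defensive.

Definition point (V : finType) := {ffun V -> bool}.

Definition weight (V : finType) (x : point V) : nat := #|[set i | x i]|.

Definition upd (V : finType) (x : point V) (j : V) (a : bool) : point V :=
  [ffun k => if k == j then a else x k].

Definition conjf (V : finType) (f : point V -> point V) (x : point V) : point V :=
  [ffun i => xorb (f x i) (x i)].

Definition even_map (V : finType) (f : point V -> point V) : Prop :=
  forall y : point V, (exists x, conjf f x = y) <-> ~~ odd (weight y).
Definition odd_map (V : finType) (f : point V -> point V) : Prop :=
  forall y : point V, (exists x, conjf f x = y) <-> odd (weight y).

(* Signed label of the arc j -> i in Gf(x):  f_i(x^{j1}) - f_i(x^{j0}) in {-1,0,1};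
   0 means no arc, 1 a positive arc, -1 a negative arc. *)
Definition Gsign (V : finType) (f : point V -> point V) (x : point V) (j i : V) : int :=
  ((f (upd x j true) i : nat)%:Z - (f (upd x j false) i : nat)%:Z)%R.

Definition Garc (V : finType) (f : point V -> point V) (x : point V) : rel V :=
  fun j i => Gsign f x j i != 0%R.

Definition outdeg (V : finType) (f : point V -> point V) (x : point V) (j : V) : nat :=
  #|[set i | Garc f x j i]|.

Definition has_cycle (V : finType) (f : point V -> point V) (x : point V) : Prop :=
  exists c : seq V, [/\ c != [::], uniq c & cycle (Garc f x) c].

(* Main.v *)
Require Import Defs.
From mathcomp Require Import all_boot all_order all_algebra.

Definition par (V : finType) (u : point V) : bool := \big[addb/false]_i u i.
Arguments par {V} u.

Lemma weight_par (V : finType) (u : point V) : odd (weight u) = par u.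
Proof.
rewrite /weight /par -sum1_card (big_morph odd oddD (erefl : odd 0 = false)).
rewrite big_mkcond /=; apply: eq_bigr => i _; rewrite inE; by case: (u i).
Qed.

Lemma par_xor (V : finType) (u w : point V) :
  par [ffun i => xorb (u i) (w i)] = par u (+) par w.
Proof.
rewrite /par -big_split /=; apply: eq_bigr => i _; rewrite ffunE; by case: (u i); case: (w i).
Qed.

Lemma par_upd (V : finType) (x : point V) (j : V) :
  par [ffun i => xorb (upd x j true i) (upd x j false i)] = true.
Proof.
rewrite /par (bigD1 j) //= big1 ?ffunE /upd ?ffunE ?eqxx //.
move=> i /negbTE Hi; rewrite !ffunE Hi; by case: (x i).
Qed.

Lemma odd_out (V : finType) (f : point V -> point V) x j :
  (even_map f \/ odd_map f) -> odd (outdeg f x j).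
Proof.
move=> H.
set a := upd x j false; set b := upd x j true.
have Hpar : par (conjf f a) = par (conjf f b).
  case: H => H.
  - have := (proj1 (H (conjf f a)) (ex_intro _ a erefl)).
    have := (proj1 (H (conjf f b)) (ex_intro _ b erefl)).
    rewrite !weight_par; by do 2 case: par.
  - have := (proj1 (H (conjf f a)) (ex_intro _ a erefl)).
    have := (proj1 (H (conjf f b)) (ex_intro _ b erefl)).
    rewrite !weight_par; by do 2 case: par.
have E : outdeg f x j = weight [ffun i => xorb (f b i) (f a i)].
  rewrite /outdeg /weight; apply: eq_card => i; rewrite !inE ffunE.
  rewrite /Garc /Gsign -/a -/b; by case: (f b i); case: (f a i).
have E2 : par [ffun i => xorb (conjf f b i) (conjf f a i)] =
  par [ffun i => xorb (f b i) (f a i)] (+) par [ffun i => xorb (b i) (a i)].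
  rewrite -par_xor; congr par; apply/ffunP => i; rewrite !ffunE.
  by case: (f b i); case: (f a i); case: (i == j); case: (x i).
move: E2; rewrite par_xor Hpar addbb par_upd E weight_par.
by case: par.
Qed.

Theorem proposition4 (V : finType) (v0 : V) (f : point V -> point V) :
  (even_map f \/ odd_map f) ->
  forall x : point V, (forall j : V, odd (outdeg f x j)) /\ has_cycle f x.
Proof.
move=> H x.
have Hout : forall j, odd (outdeg f x j) by move=> j; exact: odd_out.
split=> //.
pose s j := odflt j [pick i | Garc f x j i].
have Hs : forall j, Garc f x j (s j).
  move=> j; rewrite /s; case: pickP => [i //|H0].
  have := Hout j; rewrite /outdeg.
  have -> : [set i | Garc f x j i] = set0 by apply/setP => i; rewrite !inE H0.
  by rewrite cards0.
have : ~~ uniq (traject s v0 #|V|.+1).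
  apply/negP => /card_uniqP Hc.
  have := max_card (mem (traject s v0 #|V|.+1)).
  by rewrite Hc size_traject ltnn.
case/(uniqPn v0) => i [k] [lt_ik]; rewrite size_traject => lt_k.
rewrite !nth_traject //; last exact: ltn_trans lt_ik lt_k.
move=> Eik.
set y := iter i s v0.
have exP : exists m, (0 < m) && (iter m s y == y).
  exists (k - i); rewrite subn_gt0 lt_ik /y -iterD subnK ?Eik ?eqxx //.
  exact: ltnW.
case: (ex_minnP exP) => m /andP [m_pos /eqP Hm] Hmin.
exists (traject s y m); split.
- by case: m m_pos {Hm Hmin}.
- apply/negP => /negP /(uniqPn y) [p [q [lt_pq]]]; rewrite size_traject => lt_qm.
  rewrite !nth_traject //; last exact: ltn_trans lt_pq lt_qm.
  move=> Epq.
  have : (0 < m - q + p) && (iter (m - q + p) s y == y).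
    rewrite addn_gt0 subn_gt0 lt_qm /= iterD Epq -iterD subnK ?Hm //.
    exact: ltnW.
  move/Hmin; apply/negP; rewrite -ltnNge.
  rewrite -(ltn_add2r q) addnAC subnK ?(ltnW lt_qm) //; by rewrite ltn_add2l.
- case: m m_pos Hm {Hmin} => // m _ Hm.
  rewrite /= -[X in rcons _ X]Hm iterSr -trajectSr.
  apply: (sub_path _ (fpath_traject s y m.+1)) => a b /eqP <-; exact: Hs.
Qed.
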